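(* Let $H$ and $J$ be atomic hypergraphs on the same finite carrier $C$. Then $H$ and $J$ are cognate if and only if $H$ and $J$ have exactly the same constructions, i.e. $\mathcal C(H)=\mathcal C(J)$.
   Context: A hypergraph is a finite set $H$ of nonempty subsets of some finite set; its carrier is $\bigcup H$. For a family $F$ and a set $Y$, $F_Y=\{X\in F\mid X\subseteq Y\}$. A hypergraph partition of $H$ is a partition $\{H_1,\dots,H_n\}$ ($n\ge0$) of the set $H$ such that $\{\bigcup H_1,\dots,\bigcup H_n\}$ is a partition of $\bigcup H$; $H$ is connected if it has exactly one hypergraph partition; the finest hypergraph partition is the unique one with all blocks connected. $H$ is atomic if $\{x\}\in H$ for every $x\in\bigcup H$. Constructions of an atomic hypergraph $H$ are defined by induction on $|\bigcup H|$: (0) $\emptyset$ is the only construction of the empty hypergraph; (1) if $|\bigcup H|\ge1$, $H$ is connected, $x\in\bigcup H$ and $K$ is a construction of $H_{\bigcup H\setminus\{x\}}$, then $K\cup\{\bigcup H\}$ is a construction of $H$; (2) if $H$ is not connected with finest hypergraph partition $\{H_1,\dots,H_n\}$, $n\ge2$, and $K_i$ is a construction of $H_i$ for each $i$, then $K_1\cup\dots\cup K_n$ is a construction of $H$. $\mathcal C(H)$ denotes the set of constructions. $Y\subseteq\bigcup H$ is dispensable in $H$ when $H_Y\setminus\{Y\}$ is a connected hypergraph with carrier $Y$; $H\cup\{Y\}$ enhances $H$ when $Y$ is dispensable in $H$ and $Y\notin H$; two hypergraphs on the same carrier are cognate when related by the reflexive, symmetric, transitive closure of enhancement. *)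

(* Defs.v *)
From mathcomp Require Import all_boot.
From Stdlib Require Import Relations.Relation_Operators.
Set Implicit Arguments. Unset Strict Implicit. Unset Printing Implicit Defensive.

Section Hyper.
Variable T : finType.

Definition hypergraph (H : {set {set T}}) : Prop := set0 \notin H.

Definition carrier (H : {set {set T}}) : {set T} := \bigcup_(X in H) X.

Definition restrict (F : {set {set T}}) (Y : {set T}) : {set {set T}} :=
  [set X in F | X \subset Y].

Definition hpartition (H : {set {set T}}) (P : {set {set {set T}}}) : Prop :=
  partition P H /\
  (forall B1 B2, B1 \in P -> B2 \in P -> B1 != B2 -> [disjoint carrier B1 & carrier B2]) /\
  (forall B, B \in P -> carrier B != set0) /\
  \bigcup_(B in P) carrier B = carrier H.

Definition connected (H : {set {set T}}) : Prop :=
  exists P, hpartition H P /\ forall Q, hpartition H Q -> Q = P.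

Definition finest_hpartition (H : {set {set T}}) (P : {set {set {set T}}}) : Prop :=
  hpartition H P /\ forall B, B \in P -> connected B.

Definition atomic (H : {set {set T}}) : Prop :=
  forall x, x \in carrier H -> [set x] \in H.

Inductive construction : {set {set T}} -> {set {set T}} -> Prop :=
| constr_empty : construction set0 set0
| constr_conn (H K : {set {set T}}) (x : T) :
    0 < #|carrier H| -> connected H -> x \in carrier H ->
    construction (restrict H (carrier H :\ x)) K ->
    construction H (K :|: [set carrier H])
| constr_disc (H : {set {set T}}) (P : {set {set {set T}}})
    (Ks : {set {set T}} -> {set {set T}}) :
    ~ connected H -> finest_hpartition H P -> 2 <= #|P| ->
    (forall B, B \in P -> construction B (Ks B)) ->
    construction H (\bigcup_(B in P) Ks B).

Definition dispensable (H : {set {set T}}) (Y : {set T}) : Prop :=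
  Y \subset carrier H /\
  connected (restrict H Y :\ Y) /\ carrier (restrict H Y :\ Y) = Y.

(* enhances J H : J = H u {Y} enhances H  (Y nonempty, so J is again a hypergraph) *)
Definition enhances (J H : {set {set T}}) : Prop :=
  exists Y : {set T}, Y != set0 /\ dispensable H Y /\ Y \notin H /\ J = H :|: [set Y].

Definition cognate (H J : {set {set T}}) : Prop :=
  clos_refl_sym_trans _ enhances H J.

End Hyper.

(* Main.v *)
Require Import Defs.
From mathcomp Require Import all_boot.
From Stdlib Require Import Relations.Relation_Operators ClassicalEpsilon Classical.
Set Implicit Arguments. Unset Strict Implicit. Unset Printing Implicit Defensive.

Section Proof.
Variable T : finType.
Implicit Types (H J F G S B : {set {set T}}) (X Y e A : {set T}) (P Q : {set {set {set T}}}).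

Lemma carrierP F x : reflect (exists2 e, e \in F & x \in e) (x \in carrier F).
Proof. exact: bigcupP. Qed.

Lemma sub_carrier F e : e \in F -> e \subset carrier F.
Proof. move=> eF; exact: bigcup_sup. Qed.

Lemma carrierS F G : F \subset G -> carrier F \subset carrier G.
Proof.
move=> FG; apply/subsetP=> x /carrierP [e eF xe]; apply/carrierP; exists e => //.
exact: (subsetP FG).
Qed.

Lemma carrierU F G : carrier (F :|: G) = carrier F :|: carrier G.
Proof.
apply/setP=> x; rewrite inE; apply/carrierP/orP.
  by case=> e; rewrite inE => /orP [] eF xe; [left|right]; apply/carrierP; exists e.
by case=> /carrierP [e eF xe]; exists e; rewrite // inE eF ?orbT.
Qed.

Lemma carrier1 X : carrier [set X] = X.
Proof.
apply/setP=> x; apply/carrierP/idP; first by case=> e; rewrite inE => /eqP ->.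
by move=> xX; exists X; rewrite ?inE.
Qed.

Lemma carrier0 : carrier (set0 : {set {set T}}) = set0.
Proof. by apply/setP=> x; rewrite [RHS]inE; apply/carrierP; case=> e; rewrite inE. Qed.

Lemma carrier_eq0 F : hypergraph F -> (carrier F == set0) = (F == set0).
Proof.
move=> hF; apply/idP/idP; last by move/eqP->; rewrite carrier0.
move=> /eqP c0; apply/eqP/setP=> e; rewrite inE; apply/negbTE/negP=> eF.
have: e != set0 by apply: contraNneq hF => <-.
case/set0Pn=> x xe; have: x \in carrier F by apply/carrierP; exists e.
by rewrite c0 inE.
Qed.

Lemma inrestrict F Y X : (X \in restrict F Y) = (X \in F) && (X \subset Y).
Proof. by rewrite inE. Qed.

Lemma restrict_sub F Y : restrict F Y \subset F.
Proof. by apply/subsetP=> X; rewrite inrestrict => /andP[]. Qed.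

Lemma carrier_restrict_sub F Y : carrier (restrict F Y) \subset Y.
Proof.
apply/subsetP=> x /carrierP [e]; rewrite inrestrict => /andP [_ eY] xe.
exact: (subsetP eY).
Qed.

Lemma restrict_carrier F : restrict F (carrier F) = F.
Proof.
apply/setP=> e; rewrite inrestrict; apply/andP/idP; first by case.
by move=> eF; split=> //; apply: sub_carrier.
Qed.

Lemma restrict_restrict F A X : restrict (restrict F A) X = restrict F (A :&: X).
Proof. by apply/setP=> e; rewrite !inrestrict subsetI andbA. Qed.

Lemma restrict_sub_eq F A X : X \subset A -> restrict (restrict F A) X = restrict F X.
Proof. by move=> XA; rewrite restrict_restrict; congr restrict; apply/setIidPr. Qed.

Lemma hyp_sub F G : hypergraph F -> G \subset F -> hypergraph G.
Proof. by move=> hF GF; apply: contra hF; apply: (subsetP GF). Qed.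

Lemma hyp_restrict F A : hypergraph F -> hypergraph (restrict F A).
Proof. by move=> hF; apply: hyp_sub hF (restrict_sub _ _). Qed.

Lemma carrier_restrict_atomic F A : atomic F ->
  carrier (restrict F A) = carrier F :&: A.
Proof.
move=> aF; apply/setP=> x; rewrite inE; apply/idP/andP.
  move=> xc; split; last exact: (subsetP (carrier_restrict_sub F A)).
  exact: (subsetP (carrierS (restrict_sub F A))).
case=> xc xA; apply/carrierP; exists [set x]; last by rewrite inE.
by rewrite inrestrict aF // sub1set.
Qed.

Lemma atomic_restrict F A : atomic F -> atomic (restrict F A).
Proof.
move=> aF x; rewrite carrier_restrict_atomic // inE => /andP [xc xA].
by rewrite inrestrict aF // sub1set.
Qed.


Lemma setUDsub (U : finType) (A0 B0 : {set U}) : A0 \subset B0 -> A0 :|: (B0 :\: A0) = B0.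
Proof.
move=> AB; apply/setP=> x; rewrite !inE; case xA: (x \in A0) => //=.
by rewrite (subsetP AB).
Qed.

Lemma disjointP (U : finType) (A0 B0 : {set U}) :
  reflect (forall x, x \in A0 -> x \in B0 -> False) [disjoint A0 & B0].
Proof.
apply: (iffP idP).
  by move=> d x xA xB; rewrite (disjointFr d xA) in xB.
move=> h; rewrite -setI_eq0; apply/eqP/setP=> x; rewrite !inE.
by apply/negbTE/andP => [[]]; exact: h.
Qed.

Definition nosplit F := forall S G, S :|: G = F ->
  [disjoint carrier S & carrier G] -> S = set0 \/ G = set0.

Lemma edge_ne F e : hypergraph F -> e \in F -> e != set0.
Proof. by move=> hF eF; apply: contraNneq hF => <-. Qed.

Lemma hpE H P : hypergraph H -> hpartition H P <->
  [/\ (forall B, B \in P -> B \subset H),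
      (forall e, e \in H -> exists2 B, B \in P & e \in B),
      (forall B1 B2, B1 \in P -> B2 \in P -> B1 != B2 ->
          [disjoint carrier B1 & carrier B2])
    & set0 \notin P].
Proof.
move=> hH; split.
  case=> /and3P [/eqP cov triv n0] [dis [ne un]]; split=> //.
  - by move=> B BP; rewrite -cov; apply: bigcup_sup.
  - by move=> e; rewrite -cov => /bigcupP [B BP eB]; exists B.
case=> sub cov dis n0.
have covE : cover P = H.
  apply/setP=> e; apply/bigcupP/idP.
    by case=> B BP eB; exact: (subsetP (sub B BP)).
  by move/cov => [B BP eB]; exists B.
split.
  apply/and3P; split => //; first by rewrite covE.
  apply/trivIsetP=> B1 B2 B1P B2P ne; apply/disjointP=> e e1 e2.
  have := dis _ _ B1P B2P ne.
  have /set0Pn [x xe] : e != set0 by apply: (edge_ne hH); exact: (subsetP (sub B1 B1P)).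
  by move/disjointP => d; apply: (d x); apply/carrierP; exists e.
split=> //; split.
  move=> B BP; have /set0Pn [e eB] : B != set0 by apply: contraNneq n0 => <-.
  have eH := subsetP (sub B BP) e eB.
  have /set0Pn [x xe] := edge_ne hH eH.
  apply/set0Pn; exists x; apply/carrierP; exists e => //.
apply/setP=> x; apply/bigcupP/carrierP.
  case=> B BP /carrierP [e eB xe]; exists e => //; exact: (subsetP (sub B BP)).
case=> e /cov [B BP eB] xe; exists B => //; by apply/carrierP; exists e.
Qed.

Lemma hp_sub H P B : hpartition H P -> B \in P -> B \subset H.
Proof.
case=> /and3P [/eqP cov _ _] _ BP; rewrite -cov; exact: bigcup_sup.
Qed.

Lemma hp_cov H P e : hpartition H P -> e \in H -> exists2 B, B \in P & e \in B.
Proof.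
case=> /and3P [/eqP cov _ _] _; rewrite -cov => /bigcupP [B BP eB]; by exists B.
Qed.

Lemma hp_n0 H P : hpartition H P -> set0 \notin P.
Proof. by case=> /and3P []. Qed.

Lemma hp_uniq H P B1 B2 x : hpartition H P -> B1 \in P -> B2 \in P ->
  x \in carrier B1 -> x \in carrier B2 -> B1 = B2.
Proof.
case=> _ [dis _] B1P B2P x1 x2; case: (eqVneq B1 B2) => // ne; exfalso.
by move: (dis _ _ B1P B2P ne) => /disjointP /(_ x x1 x2).
Qed.

Lemma hp_carrier H P x : hpartition H P -> x \in carrier H ->
  exists2 B, B \in P & x \in carrier B.
Proof.
case=> _ [_ [_ un]]; rewrite -un => /bigcupP [B BP xB]; by exists B.
Qed.

Lemma hp_block_restrict H P B X : hypergraph H -> hpartition H P -> B \in P ->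
  X \subset carrier B -> restrict B X = restrict H X.
Proof.
move=> hH hP BP XB; apply/setP=> e; rewrite !inrestrict.
case eX: (e \subset X); rewrite ?andbF ?andbT //.
apply/idP/idP; first by apply: (subsetP (hp_sub hP BP)).
move=> eH; have [B' B'P eB'] := hp_cov hP eH.
have /set0Pn [x xe] := edge_ne hH eH.
have xB : x \in carrier B by apply: (subsetP XB); exact: (subsetP eX).
have xB' : x \in carrier B' by apply/carrierP; exists e.
by rewrite (hp_uniq hP BP B'P xB xB').
Qed.

Lemma hp_block_eq H P B : hypergraph H -> hpartition H P -> B \in P ->
  B = restrict H (carrier B).
Proof.
move=> hH hP BP; rewrite -(hp_block_restrict hH hP BP (subxx _)).
by rewrite restrict_carrier.
Qed.

Lemma hp_set1 F : hypergraph F -> F != set0 -> hpartition F [set F].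
Proof.
move=> hF Fn0; apply/hpE => //; split.
- by move=> B; rewrite inE => /eqP ->.
- by move=> e eF; exists F; rewrite ?inE.
- by move=> B1 B2; rewrite !inE => /eqP -> /eqP ->; rewrite eqxx.
- by rewrite inE eq_sym.
Qed.

Lemma hp_set2 F S G : hypergraph F -> S :|: G = F ->
  [disjoint carrier S & carrier G] -> S != set0 -> G != set0 ->
  hpartition F [set S; G].
Proof.
move=> hF SG dis Sn Gn; apply/hpE => //; split.
- by move=> B; rewrite !inE => /orP [] /eqP ->; rewrite -SG ?subsetUl ?subsetUr.
- move=> e; rewrite -SG inE => /orP [] eX; [exists S|exists G]; rewrite ?inE ?eqxx ?orbT //.
- move=> B1 B2; rewrite !inE => /orP [] /eqP -> /orP [] /eqP ->; rewrite ?eqxx //.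
  by rewrite disjoint_sym.
- by rewrite !inE !(eq_sym set0) negb_or Sn Gn.
Qed.

Lemma conn_nosplit F : hypergraph F -> connected F <-> nosplit F.
Proof.
move=> hF; split.
  case=> P0 [hP0 uniq] S G SG dis.
  case: (eqVneq S set0) => [-> | Sn0]; [by left|].
  case: (eqVneq G set0) => [-> | Gn0]; [by right|].
  exfalso.
  have Fn0 : F != set0.
    apply: contraNneq Sn0 => F0; rewrite -subset0 -F0 -SG subsetUl //.
  have e1 := uniq _ (hp_set1 hF Fn0).
  have e2 := uniq _ (hp_set2 hF SG dis Sn0 Gn0).
  have : S \in [set F] by rewrite e1 -e2 !inE eqxx.
  have : G \in [set F] by rewrite e1 -e2 !inE eqxx orbT.
  rewrite !inE => /eqP GF /eqP SF.
  move: dis; rewrite SF GF -setI_eq0 setIid carrier_eq0 //.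
  by move/eqP => F0; move: Fn0; rewrite F0 eqxx.
move=> ns.
case: (eqVneq F set0) => [F0 | Fn0].
  exists set0; split.
    rewrite F0; apply/hpE; [by rewrite /hypergraph inE| split] => //.
    - by move=> B; rewrite in_set0.
    - by move=> e; rewrite in_set0.
    - by move=> B1 B2; rewrite in_set0.
    - by rewrite in_set0.
  move=> Q hQ; apply/setP=> B; rewrite inE; apply/negbTE/negP => BQ.
  have := hp_sub hQ BQ; rewrite F0 subset0 => /eqP B0.
  by move: (hp_n0 hQ); rewrite -B0 BQ.
exists [set F]; split; first exact: hp_set1.
move=> Q hQ.
have blk : forall B, B \in Q -> B = F.
  move=> B BQ; have BF := hp_sub hQ BQ.
  have dis : [disjoint carrier B & carrier (F :\: B)].
    apply/disjointP=> x xB /carrierP [e]; rewrite inE => /andP [eB eF] xe.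
    have [B' B'Q eB'] := hp_cov hQ eF.
    have xB' : x \in carrier B' by apply/carrierP; exists e.
    by move: eB; rewrite (hp_uniq hQ BQ B'Q xB xB') eB'.
  case: (ns _ _ (setUDsub BF) dis) => [B0|].
  - by move: (hp_n0 hQ); rewrite -B0 BQ.
  - by move/eqP; rewrite setD_eq0 => FB; apply/eqP; rewrite eqEsubset BF.
apply/setP=> B; rewrite inE; apply/idP/eqP; first exact: blk.
move=> ->; have /set0Pn [e eF] := Fn0.
have [B' B'Q eB'] := hp_cov hQ eF.
by rewrite -(blk _ B'Q).
Qed.


Lemma disj_nocommon S G e : hypergraph S ->
  [disjoint carrier S & carrier G] -> e \in S -> e \in G -> False.
Proof.
move=> hS dis eS eG; have /set0Pn [x xe] := edge_ne hS eS.
by move/disjointP: dis => d; apply: (d x); apply/carrierP; exists e.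
Qed.

Lemma disj_carrier0 S G C : hypergraph C -> [disjoint carrier S & carrier G] ->
  C \subset S -> C \subset G -> C = set0.
Proof.
move=> hC dis CS CG; apply/eqP; rewrite -carrier_eq0 //; apply/eqP/setP=> x.
rewrite in_set0; apply/negbTE/negP => xC; move/disjointP: dis => d; apply: (d x).
  exact: (subsetP (carrierS CS)).
exact: (subsetP (carrierS CG)).
Qed.

Lemma edge_conn F e : hypergraph F -> e \in F -> connected (restrict F e).
Proof.
move=> hF eF; have hR := hyp_restrict e hF.
apply/conn_nosplit => // S G SG dis.
have eR : e \in restrict F e by rewrite inrestrict eF subxx.
have hS : hypergraph S by apply: hyp_sub hR _; rewrite -SG subsetUl.
have hG : hypergraph G by apply: hyp_sub hR _; rewrite -SG subsetUr.
have cS : carrier S \subset e by apply: subset_trans (carrier_restrict_sub F e);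
  apply: carrierS; rewrite -SG subsetUl.
have cG : carrier G \subset e by apply: subset_trans (carrier_restrict_sub F e);
  apply: carrierS; rewrite -SG subsetUr.
move: eR; rewrite -SG inE => /orP [] eX; [right|left].
- apply/eqP; rewrite -carrier_eq0 // -subset0.
  apply/subsetP=> x xG; move/disjointP: dis => /(_ x); rewrite xG => d.
  exfalso; apply: d => //; apply/carrierP; exists e => //; exact: (subsetP cG).
- apply/eqP; rewrite -carrier_eq0 // -subset0.
  apply/subsetP=> x xS; move/disjointP: dis => /(_ x xS) d.
  exfalso; apply: d => //; apply/carrierP; exists e => //; exact: (subsetP cS).
Qed.

Lemma hp_single H P B x : atomic H -> hpartition H P -> B \in P ->
  x \in carrier B -> [set x] \in B.
Proof.
move=> aH hP BP xB.
have xH : x \in carrier H by apply: (subsetP (carrierS (hp_sub hP BP))).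
have [B' B'P xB'] := hp_cov hP (aH x xH).
have : x \in carrier B' by apply/carrierP; exists [set x]; rewrite ?inE.
by move=> xc; rewrite (hp_uniq hP BP B'P xB xc).
Qed.

Lemma hp_atomic H P B : atomic H -> hpartition H P -> B \in P -> atomic B.
Proof. by move=> aH hP BP x xB; apply: hp_single aH hP BP xB. Qed.

Lemma hp_hyp H P B : hypergraph H -> hpartition H P -> B \in P -> hypergraph B.
Proof. by move=> hH hP BP; apply: (hyp_sub hH (hp_sub hP BP)). Qed.

Lemma hp_lt H P B B' : hpartition H P -> B \in P -> B' \in P -> B != B' ->
  #|carrier B| < #|carrier H|.
Proof.
move=> hP BP B'P ne; apply: proper_card; apply/properP; split.
  exact: carrierS (hp_sub hP BP).
case: (hP) => _ [dis [nz _]].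
have /set0Pn [x xB'] := nz _ B'P.
exists x; first exact: (subsetP (carrierS (hp_sub hP B'P))).
apply/negP => xB; move: (dis _ _ BP B'P ne) => /disjointP d; exact: (d x).
Qed.

Lemma in_block H P X : hypergraph H -> atomic H -> hpartition H P ->
  X \subset carrier H -> X != set0 -> connected (restrict H X) ->
  exists2 B, B \in P & X \subset carrier B.
Proof.
move=> hH aH hP XC /set0Pn [x xX] cX.
have [B BP xB] := hp_carrier hP (subsetP XC x xX).
exists B => //.
have hR := hyp_restrict X hH.
have ns := (conn_nosplit hR).1 cX (restrict B X) (restrict H X :\: B).
have SG : restrict B X :|: (restrict H X :\: B) = restrict H X.
  apply/setP=> e; rewrite !inE; case eB: (e \in B) => //=.
  by rewrite orbF (subsetP (hp_sub hP BP)).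
have dis : [disjoint carrier (restrict B X) & carrier (restrict H X :\: B)].
  apply/disjointP=> y yS /carrierP [f]; rewrite !inE => /and3P [fB fH fX] yf.
  have yB : y \in carrier B by apply: (subsetP (carrierS (restrict_sub B X))).
  have [B' B'P fB'] := hp_cov hP fH.
  have yB' : y \in carrier B' by apply/carrierP; exists f.
  by move: fB; rewrite (hp_uniq hP BP B'P yB yB') fB'.
case: (ns SG dis) => [S0 | G0].
  have : [set x] \in restrict B X by rewrite inrestrict (hp_single aH hP BP xB) sub1set.
  by rewrite S0 inE.
have : X = carrier (restrict H X).
  by rewrite carrier_restrict_atomic //; apply/esym/setIidPr.
move=> ->; rewrite -SG G0 setU0; apply: carrierS; exact: restrict_sub.
Qed.


Lemma hp_edge_eq H P B1 B2 e : hypergraph H -> hpartition H P -> B1 \in P -> B2 \in P ->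
  e \in B1 -> e \in B2 -> B1 = B2.
Proof.
move=> hH hP B1P B2P e1 e2.
have /set0Pn [x xe] := edge_ne hH (subsetP (hp_sub hP B1P) e e1).
by apply: (@hp_uniq H P B1 B2 x hP B1P B2P); apply/carrierP; exists e.
Qed.

Lemma refine_hp H P B S G : hypergraph H -> hpartition H P -> B \in P ->
  S :|: G = B -> [disjoint carrier S & carrier G] -> S != set0 -> G != set0 ->
  hpartition H ((P :\ B) :|: [set S; G]) /\ #|P| < #|(P :\ B) :|: [set S; G]|.
Proof.
move=> hH hP BP SG dis Sn Gn.
have SB : S \subset B by rewrite -SG subsetUl.
have GB : G \subset B by rewrite -SG subsetUr.
have cS : carrier S \subset carrier B by apply: carrierS.
have cG : carrier G \subset carrier B by apply: carrierS.
have hB := hp_hyp hH hP BP.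
have hS := hyp_sub hB SB.
have notin : forall C : {set {set T}}, C \subset B -> C != set0 -> C != B -> C \notin P :\ B.
  move=> C CB /set0Pn [e eC] CnB; rewrite !inE CnB /=; apply/negP => CP.
  by move: CnB; rewrite (hp_edge_eq hH hP CP BP eC (subsetP CB e eC)) eqxx.
have SnB : S != B.
  apply/negP => /eqP SeB; case/set0Pn: Gn => e eG.
  by apply: (disj_nocommon hS dis _ eG); rewrite SeB (subsetP GB).
have GnB : G != B.
  apply/negP => /eqP GeB; case/set0Pn: Sn => e eS.
  by apply: (disj_nocommon hS dis eS); rewrite GeB (subsetP SB).
have SnG : S != G.
  apply/negP => /eqP SeG; case/set0Pn: Sn => e eS.
  by apply: (disj_nocommon hS dis eS); rewrite -SeG.
split.
  case: ((hpE P hH).1 hP) => sb cov disP n0.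
  apply/hpE => //; split.
  - move=> C; rewrite !inE => /orP [/andP [_ CP] | /orP [] /eqP ->].
    + exact: sb.
    + exact: subset_trans SB (sb _ BP).
    + exact: subset_trans GB (sb _ BP).
  - move=> e eH; have [B0 B0P eB0] := cov e eH.
    case: (eqVneq B0 B) => [E | ne].
      by move: eB0; rewrite E -SG inE => /orP [] ex; [exists S | exists G];
        rewrite // !inE eqxx ?orbT.
    by exists B0; rewrite // !inE ne B0P.
  - move=> B1 B2; rewrite !inE.
    move=> /orP [/andP [n1 P1] | /orP [] /eqP ->] /orP [/andP [n2 P2] | /orP [] /eqP ->] ne;
      rewrite ?eqxx // ?(disjoint_sym (carrier G)) //.
    all: try by rewrite eqxx in ne.
    + exact: disP.
    + exact: disjointWr cS (disP _ _ P1 BP n1).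
    + exact: disjointWr cG (disP _ _ P1 BP n1).
    + by apply: disjointWl cS (disP _ _ BP P2 _); rewrite eq_sym.
    + by apply: disjointWr cG (disP _ _ P2 BP _).
  - by rewrite !inE !negb_or !(eq_sym set0) Sn Gn /= andbC negb_and n0 orbT.
rewrite cardsU.
have -> : (P :\ B) :&: [set S; G] = set0.
  apply/setP=> C; rewrite !inE; apply/negbTE; apply/negP => /andP [CP /orP [] /eqP E].
    by move: (notin S SB Sn SnB); rewrite -E !inE CP.
  by move: (notin G GB Gn GnB); rewrite -E !inE CP.
rewrite cards0 subn0 cards2 SnG (cardsD1 B P) BP.
by rewrite addnC ltn_add2l.
Qed.


Lemma hp_set0 : hpartition (set0 : {set {set T}}) set0.
Proof.
apply/hpE; first by rewrite /hypergraph in_set0.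
split.
- by move=> B; rewrite in_set0.
- by move=> e; rewrite in_set0.
- by move=> B1 B2; rewrite in_set0.
- by rewrite in_set0.
Qed.

Lemma not_nosplit B : hypergraph B -> ~ connected B ->
  exists S G, [/\ S :|: G = B, [disjoint carrier S & carrier G],
    S != set0 & G != set0].
Proof.
move=> hB nc; apply: NNPP => hn; apply: nc; apply/conn_nosplit => // S G SG dis.
case: (eqVneq S set0) => [->|Sn]; [by left|].
case: (eqVneq G set0) => [->|Gn]; [by right|].
by exfalso; apply: hn; exists S, G.
Qed.

Lemma finest_exists H : hypergraph H -> exists P, finest_hpartition H P.
Proof.
move=> hH.
have [P0 hP0] : exists P, hpartition H P.
  case: (eqVneq H set0) => [->|Hn]; last by exists [set H]; apply: hp_set1.
  by exists set0; apply: hp_set0.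
set N := #|{set {set T}}|.
suff : forall n P, N - #|P| < n -> hpartition H P -> exists Q, finest_hpartition H Q.
  by move=> /(_ (N - #|P0|).+1 P0 (ltnSn _) hP0).
elim=> [//|n IH] P lt hP.
case: (classic (forall B, B \in P -> connected B)) => [allc|].
  by exists P; split.
move=> nall; have [B hB] := not_all_ex_not _ _ nall.
have [BP nc] := imply_to_and _ _ hB.
have [S [G [SG dis Sn Gn]]] := not_nosplit (hp_hyp hH hP BP) nc.
have [hP' ltP] := refine_hp hH hP BP SG dis Sn Gn.
apply: (IH _ _ hP').
have leN := max_card (mem ((P :\ B) :|: [set S; G])).
have : N - #|(P :\ B) :|: [set S; G]| < N - #|P|.
  apply: ltn_sub2l => //; exact: leq_trans ltP leN.
by move=> h; apply: leq_trans h _.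
Qed.


Definition Eqc H J := forall X, connected (restrict H X) <-> connected (restrict J X).

Lemma carrier_block_restrict J (Z : {set T}) : atomic J -> Z \subset carrier J ->
  carrier (restrict J Z) = Z.
Proof. by move=> aJ BJ; rewrite carrier_restrict_atomic //; apply/setIidPr. Qed.

Lemma transfer H K : construction H K -> forall J, hypergraph H -> hypergraph J ->
  atomic H -> atomic J -> carrier H = carrier J -> Eqc H J -> construction J K.
Proof.
elim=> {H K} [|H K x pos cH xH _ IH|H P Ks nc [hP allc] two _ IH]
  J hH hJ aH aJ CHJ E.
- have : J = set0 by apply/eqP; rewrite -carrier_eq0 // -CHJ carrier0.
  by move=> ->; exact: constr_empty.
- have cJ : connected J.
    move: (E (carrier H)); rewrite restrict_carrier CHJ restrict_carrier.
    by case=> h _; exact: h.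
  have := IH (restrict J (carrier H :\ x)) (hyp_restrict _ hH) (hyp_restrict _ hJ)
    (@atomic_restrict _ (carrier H :\ x) aH) (@atomic_restrict _ (carrier H :\ x) aJ).
  rewrite !carrier_restrict_atomic // CHJ => /(_ erefl).
  have E' : Eqc (restrict H (carrier J :\ x)) (restrict J (carrier J :\ x)).
    by move=> X; rewrite !restrict_restrict; exact: E.
  move=> /(_ E') KJ.
  by apply: (constr_conn (x:=x)) => //; rewrite -CHJ.
- pose f B := restrict J (carrier B).
  have BC : forall B, B \in P -> carrier B \subset carrier J.
    by move=> B BP; rewrite -CHJ; apply: carrierS; apply: hp_sub hP BP.
  have cf : forall B, B \in P -> carrier (f B) = carrier B.
    by move=> B BP; rewrite /f carrier_block_restrict // BC.
  have Beq : forall B, B \in P -> restrict H (carrier B) = B.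
    by move=> B BP; rewrite -(hp_block_eq hH hP BP).
  have finj : {in P &, injective f}.
    by move=> B1 B2 B1P B2P e; rewrite -(Beq _ B1P) -(Beq _ B2P) -cf // e cf.
  pose Ks' B' := Ks (restrict H (carrier B')).
  have -> : \bigcup_(B in P) Ks B = \bigcup_(B' in f @: P) Ks' B'.
    rewrite big_imset //; apply: eq_bigr => B BP.
    by rewrite /Ks' cf // Beq.
  apply: (constr_disc (P := f @: P)).
  + move=> cJ; apply: nc.
    move: (E (carrier H)); rewrite restrict_carrier CHJ restrict_carrier.
    by case=> _ h; exact: h.
  + split.
    * apply/hpE => //; split.
      - by move=> B' /imsetP [B BP ->]; exact: restrict_sub.
      - move=> e eJ.
        have eC : e \subset carrier H by rewrite CHJ sub_carrier.
        have cHe : connected (restrict H e) by apply/E; exact: edge_conn.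
        have [B BP eB] := in_block hH aH hP eC (edge_ne hJ eJ) cHe.
        by exists (f B); [exact: imset_f | rewrite inrestrict eJ eB].
      - move=> B1' B2' /imsetP [B1 B1P ->] /imsetP [B2 B2P ->] ne.
        rewrite !cf //; case: hP => _ [dis _]; apply: dis => //.
        by apply: contraNneq ne => ->.
      - apply/imsetP => [[B BP B0]].
        have : carrier (f B) = set0 by rewrite -B0 carrier0.
        rewrite cf // => c0; case: hP => _ [_ [nz _]].
        by move: (nz _ BP); rewrite c0 eqxx.
    * move=> B' /imsetP [B BP ->]; apply/E; rewrite Beq //; exact: allc.
  + by rewrite card_in_imset.
  + move=> B' /imsetP [B BP ->].
    rewrite /Ks' cf // Beq //.
    apply: IH => //.
    * exact: hp_hyp hH hP BP.
    * exact: hyp_restrict.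
    * exact: hp_atomic aH hP BP.
    * exact: atomic_restrict.
    * by rewrite cf.
    * move=> X; rewrite -{1}(Beq _ BP) !restrict_restrict; exact: E.
Qed.


Lemma hypU1 F Y : hypergraph F -> Y != set0 -> hypergraph (F :|: [set Y]).
Proof. by move=> hF Yn; rewrite /hypergraph !inE negb_or hF eq_sym Yn. Qed.

Lemma add_fwd F G Y S U : hypergraph F -> Y != set0 -> G \subset F ->
  carrier G = Y -> nosplit F -> S :|: U = F :|: [set Y] ->
  [disjoint carrier S & carrier U] -> Y \in S -> U = set0.
Proof.
move=> hF Yn GF cG ns SU dis YS.
have hFY := hypU1 hF Yn.
have hU : hypergraph U by apply: hyp_sub hFY _; rewrite -SU subsetUr.
have YU : Y \notin U.
  apply/negP => YU; have /set0Pn [x xY] := Yn.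
  move/disjointP: dis => d; apply: (d x).
    by apply/carrierP; exists Y.
  by apply/carrierP; exists Y.
have UF : U \subset F.
  apply/subsetP=> e eU; have : e \in F :|: [set Y] by rewrite -SU inE eU orbT.
  rewrite inE => /orP [] // /[!inE] /eqP eY; by move: YU; rewrite -eY eU.
have SUF : (S :&: F) :|: U = F.
  apply/setP=> e; rewrite !inE; case eU: (e \in U); rewrite ?orbT /=.
    by rewrite (subsetP UF).
  have := congr1 (fun A0 : {set {set T}} => e \in A0) SU; rewrite /= !inE eU orbF.
  by move=> h; rewrite orbF; case eF: (e \in F); rewrite ?andbF ?andbT // h eF.
have dis' : [disjoint carrier (S :&: F) & carrier U].
  by apply: disjointWl dis; apply: carrierS; apply: subsetIl.
case: (ns _ _ SUF dis') => // S0.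
exfalso; have GU : G \subset U.
  apply/subsetP=> e eG; have : e \in (S :&: F) :|: U by rewrite SUF (subsetP GF).
  by rewrite S0 set0U.
have /set0Pn [x xY] := Yn.
move/disjointP: dis => d; apply: (d x).
  by apply/carrierP; exists Y.
by rewrite -cG in xY; exact: (subsetP (carrierS GU)).
Qed.

Lemma add_bwd F G Y S U : nosplit G -> nosplit (F :|: [set Y]) ->
  carrier G = Y -> S :|: U = F ->
  [disjoint carrier S & carrier U] -> G \subset S -> U = set0.
Proof.
move=> nsG ns cG SU dis GS.
have YS : Y \subset carrier S by rewrite -cG; apply: carrierS.
have SU' : (S :|: [set Y]) :|: U = F :|: [set Y].
  by rewrite -SU setUAC.
have dis' : [disjoint carrier (S :|: [set Y]) & carrier U].
  by rewrite carrierU carrier1; move/setUidPl: YS => ->.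
case: (ns _ _ SU' dis') => // /setP /(_ Y); rewrite !inE eqxx orbT //.
Qed.

Lemma add_nosplit F G Y : hypergraph F -> Y != set0 -> G \subset F ->
  nosplit G -> carrier G = Y -> (nosplit F <-> nosplit (F :|: [set Y])).
Proof.
move=> hF Yn GF nsG cG; split.
  move=> ns S U SU dis.
  have : Y \in S :|: U by rewrite SU !inE eqxx orbT.
  rewrite inE => /orP [] YX.
    by right; apply: (add_fwd hF Yn GF cG ns SU dis YX).
  by left; apply: (add_fwd hF Yn GF cG ns _ _ YX); rewrite 1?setUC 1?disjoint_sym.
move=> ns S U SU dis.
have GSU : (G :&: S) :|: (G :&: U) = G.
  by rewrite -setIUr; apply/setIidPl; rewrite SU.
have disG : [disjoint carrier (G :&: S) & carrier (G :&: U)].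
  by apply: disjointW dis; apply: carrierS; apply: subsetIr.
case: (nsG _ _ GSU disG) => G0.
  left; apply: (add_bwd (F:=F) (G:=G) (Y:=Y) (S:=U) (U:=S) nsG ns cG);
    rewrite 1?setUC 1?disjoint_sym //.
  apply/subsetP=> e eG; have : e \in G :&: S :|: G :&: U by rewrite GSU.
  by rewrite G0 set0U inE eG.
right; apply: (add_bwd nsG ns cG SU dis).
apply/subsetP=> e eG; have : e \in G :&: S :|: G :&: U by rewrite GSU.
by rewrite G0 setU0 inE eG.
Qed.


Lemma Eqc_sym H J : Eqc H J -> Eqc J H.
Proof. by move=> E X; apply: iff_sym; exact: E. Qed.

Lemma Eqc_trans H J G : Eqc H J -> Eqc J G -> Eqc H G.
Proof. by move=> E1 E2 X; apply: iff_trans (E1 X) (E2 X). Qed.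

Lemma enh_eqc H J : hypergraph H -> enhances J H -> Eqc H J.
Proof.
move=> hH; rewrite /enhances /dispensable => -[Y [Yn [[YC [cG cGY]] [YH ->]]]] X.
have GH : restrict H Y :\ Y = restrict H Y.
  by apply/setP=> e; rewrite !inE; case: eqP => // ->; rewrite (negbTE YH).
rewrite GH in cG cGY.
case YX: (Y \subset X).
  have -> : restrict (H :|: [set Y]) X = restrict H X :|: [set Y].
    apply/setP=> e; rewrite !inE; case: eqP => [->|]; rewrite ?YX ?orbT ?orbF //.
  have hR := hyp_restrict X hH.
  rewrite (conn_nosplit hR) (conn_nosplit (hypU1 hR Yn)).
  apply: (add_nosplit hR Yn _ _ cGY).
    by apply/subsetP=> e; rewrite !inrestrict => /andP [-> eY]; apply: subset_trans eY YX.
  exact/(conn_nosplit (hyp_restrict Y hH)).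
have -> : restrict (H :|: [set Y]) X = restrict H X.
  apply/setP=> e; rewrite !inE; case: eqP => [->|]; rewrite ?YX ?orbF //.
  by rewrite (negbTE YH).
by [].
Qed.

Definition Rel H J := (set0 \in H = (set0 \in J)) /\ (hypergraph H -> Eqc H J).

Lemma cognate_Rel H J : cognate H J -> Rel H J.
Proof.
elim=> {H J} [x y st|x|x y _ [e E]|x y z _ [e1 E1] _ [e2 E2]].
- split.
    case: (st) => Y [Yn [_ [_ ->]]].
    by rewrite inE in_set1 (eq_sym set0 Y) (negbTE Yn) orbF.
  move=> hx; apply: Eqc_sym; apply: (enh_eqc _ st).
  by case: (st) => Y [_ [_ [_ xe]]]; apply: hyp_sub hx _; rewrite xe subsetUl.
- by split => // _ X.
- split=> // hy; apply: Eqc_sym; apply: E; by rewrite /hypergraph e.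
- split; first by rewrite e1.
  move=> hx; apply: Eqc_trans (E1 hx) (E2 _); by rewrite /hypergraph -e1.
Qed.


Definition satP H X := [/\ X != set0, X \subset carrier H & connected (restrict H X)].

Lemma constr_sat H K : construction H K -> hypergraph H ->
  forall X, X \in K -> satP H X.
Proof.
elim=> {H K} [|H K x pos cH xH _ IH|H P Ks nc [hP allc] two _ IH] hH X.
- by rewrite in_set0.
- rewrite inE => /orP [XK | /[!inE] /eqP ->].
    have [Xn XA cX] := IH (hyp_restrict _ hH) X XK.
    have XA' : X \subset carrier H :\ x :=
      subset_trans XA (carrier_restrict_sub _ _).
    split=> //.
      by apply: subset_trans XA' _; apply: subsetDl.
    by rewrite restrict_sub_eq in cX.
  split; last by rewrite restrict_carrier.
    by rewrite -card_gt0.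
  exact: subxx.
- move=> /bigcupP [B BP XB].
  have [Xn XB' cX] := IH B BP (hp_hyp hH hP BP) X XB.
  split=> //.
    by apply: subset_trans XB' _; apply: carrierS; apply: hp_sub hP BP.
  by rewrite -(hp_block_restrict hH hP BP XB').
Qed.

Lemma other_block P (B : {set {set T}}) : 2 <= #|P| -> B \in P ->
  exists2 B', B' \in P & B' != B.
Proof.
move=> two BP; move: two; rewrite (cardsD1 B P) BP add1n ltnS card_gt0.
by case/set0Pn => B'; rewrite !inE => /andP [ne B'P]; exists B'.
Qed.

Lemma two_blocks H P : hypergraph H -> ~ connected H -> finest_hpartition H P ->
  H != set0 -> 2 <= #|P|.
Proof.
move=> hH nc [hP allc] /set0Pn [e eH].
have [B BP eB] := hp_cov hP eH.
have [B' B'P ne] : exists2 B', B' \in P & B' != B.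
  apply: NNPP => nex; exfalso; apply: nc.
  have PB : P = [set B].
    apply/setP=> C; rewrite inE; apply/idP/eqP => [CP|->//].
    by apply/eqP; apply: contraT => ne; exfalso; apply: nex; exists C.
  have HB : H = B.
    apply/eqP; rewrite eqEsubset (hp_sub hP BP) andbT.
    apply/subsetP=> f fH; have [C CP fC] := hp_cov hP fH.
    by move: CP fC; rewrite PB inE => /eqP ->.
  by rewrite HB; apply: allc.
by rewrite (cardsD1 B P) BP add1n ltnS card_gt0; apply/set0Pn; exists B';
  rewrite !inE ne B'P.
Qed.


Lemma choose_fun (P : {set {set {set T}}}) (Q : {set {set T}} -> {set {set T}} -> Prop) :
  (forall B, B \in P -> exists K, Q B K) ->
  exists Ks : {set {set T}} -> {set {set T}}, forall B, B \in P -> Q B (Ks B).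
Proof.
move=> h.
have h' : forall B, exists K, B \in P -> Q B K.
  move=> B; case: (boolP (B \in P)) => BP.
    by have [K QK] := h B BP; exists K.
  by exists set0.
exists (fun B => proj1_sig (constructive_indefinite_description _ (h' B))).
by move=> B BP; case: (constructive_indefinite_description _ (h' B)) => K /= /(_ BP).
Qed.

Lemma sat_constr H : hypergraph H -> atomic H ->
  (exists K, construction H K) /\
  (forall X, satP H X -> exists K, construction H K /\ X \in K).
Proof.
move: {2}#|carrier H|.+1 (ltnSn #|carrier H|) => n; elim: n H => [//|n IHn] H lt hH aH.
have IH : forall A, #|carrier H :&: A| < #|carrier H| ->
  (exists K, construction (restrict H A) K) /\
  (forall X, satP (restrict H A) X -> exists K, construction (restrict H A) K /\ X \in K).
  move=> A ltA; apply: IHn; rewrite ?carrier_restrict_atomic //.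
    by apply: leq_trans ltA _; rewrite -ltnS.
  exact: hyp_restrict.
  exact: atomic_restrict.
case: (eqVneq (carrier H) set0) => [C0 | /set0Pn [x0 x0C]].
  have H0 : H = set0 by apply/eqP; rewrite -carrier_eq0 // C0.
  split; first by exists set0; rewrite H0; exact: constr_empty.
  move=> X [Xn XC _]; move: XC; rewrite C0 subset0 => X0; by rewrite X0 in Xn.
have ltx : forall x, x \in carrier H -> #|carrier H :&: (carrier H :\ x)| < #|carrier H|.
  move=> x xC; apply: proper_card; apply/properP; split; first exact: subsetIl.
  by exists x => //; rewrite !inE eqxx andbF.
have pos : 0 < #|carrier H| by rewrite card_gt0; apply/set0Pn; exists x0.
case: (classic (connected H)) => cH.
  have [[K0 K0c] _] := IH _ (ltx _ x0C).
  have ex : construction H (K0 :|: [set carrier H]) by apply: constr_conn K0c.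
  split; first by exists (K0 :|: [set carrier H]).
  move=> X [Xn XC cX].
  case: (eqVneq X (carrier H)) => [-> | XnC].
    by exists (K0 :|: [set carrier H]); split => //; rewrite !inE eqxx orbT.
  have [x xC xX] : exists2 x, x \in carrier H & x \notin X.
    have pr : X \proper carrier H by rewrite properEneq XnC XC.
    by case/properP: pr => _ [x xC xX]; exists x.
  have [_ IHx] := IH _ (ltx _ xC).
  have [K [Kc XK]] : exists K, construction (restrict H (carrier H :\ x)) K /\ X \in K.
    apply: IHx; split => //.
      rewrite carrier_restrict_atomic //; apply/subsetP=> y yX.
      rewrite !inE (subsetP XC _ yX) andbT; apply: contraNneq xX => <- //.
    rewrite restrict_sub_eq //; apply/subsetP=> y yX.
    rewrite !inE (subsetP XC _ yX) andbT; apply: contraNneq xX => <- //.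
  exists (K :|: [set carrier H]); split; first exact: constr_conn Kc.
  by rewrite inE XK.
have [P [hP allc]] := finest_exists hH.
have Hn : H != set0 by rewrite -carrier_eq0 //; apply/set0Pn; exists x0.
have two := two_blocks hH cH (conj hP allc) Hn.
have IHB : forall B, B \in P ->
  (exists K, construction B K) /\
  (forall X, satP B X -> exists K, construction B K /\ X \in K).
  move=> B BP; have [B' B'P ne] := other_block two BP.
  have ltB := hp_lt hP BP B'P (negbT _).
  rewrite (hp_block_eq hH hP BP); apply: IH.
  rewrite (setIidPr _) //; last by apply: carrierS; apply: hp_sub hP BP.
  by apply: hp_lt hP BP B'P _; rewrite eq_sym.
have [Ks Ksc] := choose_fun (fun B BP => (IHB B BP).1).
split; first by exists (\bigcup_(B in P) Ks B); apply: constr_disc Ksc.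
move=> X [Xn XC cX].
have [B0 B0P XB0] := in_block hH aH hP XC Xn cX.
have [K0 [K0c XK0]] : exists K, construction B0 K /\ X \in K.
  apply: (IHB B0 B0P).2; split => //.
  by rewrite (hp_block_restrict hH hP B0P XB0).
exists (\bigcup_(B in P) (if B == B0 then K0 else Ks B)); split.
  apply: constr_disc => // B BP; case: eqP => [-> //|_]; exact: Ksc.
by apply/bigcupP; exists B0 => //; rewrite eqxx.
Qed.


Definition asb (Pr : Prop) : bool := if excluded_middle_informative Pr then true else false.

Lemma asbP (Pr : Prop) : reflect Pr (asb Pr).
Proof. by rewrite /asb; case: excluded_middle_informative => h; constructor. Qed.

Definition SatS H : {set {set T}} := [set X | asb (satP H X)].

Lemma sat_cognate H : hypergraph H -> atomic H -> cognate H (SatS H).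
Proof.
move=> hH aH.
have satC : forall X, X \in SatS H -> X \subset carrier H.
  by move=> X; rewrite inE => /asbP [].
suff : forall n G, #|SatS H :\: G| < n -> H \subset G -> G \subset SatS H ->
    cognate H G -> cognate H (SatS H).
  move=> /(_ _ H (ltnSn _) (subxx _)); apply; last exact: rst_refl.
  apply/subsetP=> e eH; rewrite inE; apply/asbP; split.
  - exact: edge_ne hH eH.
  - exact: sub_carrier.
  - exact: edge_conn.
elim=> [//|n IHn] G lt HG GS cHG.
case: (eqVneq (SatS H :\: G) set0) => [D0 | /set0Pn [Y]].
  have -> : SatS H = G by apply/eqP; rewrite eqEsubset GS andbT -setD_eq0 D0.
  exact: cHG.
rewrite inE => /andP [YG YS].
have [Yn YC cY] : satP H Y by move: YS; rewrite inE => /asbP.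
have [_ E] := cognate_Rel cHG.
have cGY : connected (restrict G Y) by apply/(E hH).
have GH : restrict G Y :\ Y = restrict G Y.
  by apply/setP=> e; rewrite !inE; case: eqP => // ->; rewrite (negbTE YG).
have enh : enhances (G :|: [set Y]) G.
  exists Y; split=> //; split; last by split.
  split; first by apply: subset_trans YC (carrierS HG).
  rewrite GH; split => //.
  apply/eqP; rewrite eqEsubset carrier_restrict_sub /=.
  rewrite -{1}(carrier_block_restrict aH YC); apply: carrierS.
  apply/subsetP=> e; rewrite !inrestrict => /andP [eH ->]; by rewrite (subsetP HG).
apply: (IHn (G :|: [set Y])).
- rewrite -ltnS; apply: leq_trans lt; rewrite ltnS; apply: proper_card.
  apply/properP; split.
    by apply/subsetP=> e; rewrite !inE negb_or => /andP [/andP [-> _] ->].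
  exists Y; first by rewrite !inE YG; move: YS; rewrite inE.
  by rewrite !inE eqxx orbT.
- by apply: subset_trans HG (subsetUl _ _).
- by rewrite subUset GS sub1set.
- apply: rst_trans cHG _; apply: rst_sym; exact: rst_step.
Qed.

End Proof.

Unset Implicit Arguments.

Theorem proposition4p9 (T : finType) (H J : {set {set T}}) :
  hypergraph H -> hypergraph J -> atomic H -> atomic J ->
  carrier H = carrier J ->
  (cognate H J <-> (forall K, construction H K <-> construction J K)).
Proof.
move=> hH hJ aH aJ CHJ; split.
  move=> cg; have [_ E] := cognate_Rel cg; have E' := E hH.
  move=> K; split => KC.
    exact: transfer KC J hH hJ aH aJ CHJ E'.
  exact: transfer KC H hJ hH aJ aH (esym CHJ) (Eqc_sym E').
move=> HJ.
have SE : SatS H = SatS J.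
  apply/setP=> X; rewrite !inE; apply/asbP/asbP => sX.
    have [K [KC XK]] := (sat_constr hH aH).2 X sX.
    exact: constr_sat ((HJ K).1 KC) hJ X XK.
  have [K [KC XK]] := (sat_constr hJ aJ).2 X sX.
  exact: constr_sat ((HJ K).2 KC) hH X XK.
apply: rst_trans (sat_cognate hH aH) _.
by rewrite SE; apply: rst_sym; apply: sat_cognate.
Qed.
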